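(* Let $\lambda\geqslant1$ be a cardinal, $n$ a positive integer, and $\tau$ any (Hausdorff) inverse semigroup topology on $\mathscr{I}_\lambda^n$ (i.e. a topology making multiplication and inversion continuous). Then $(\mathscr{I}_\lambda^n,\tau)$ is absolutely $H$-closed in the class of topological inverse semigroups; that is, for every topological inverse semigroup $T$ and every continuous homomorphism $h\colon(\mathscr{I}_\lambda^n,\tau)\to T$, the image $(\mathscr{I}_\lambda^n)h$ is closed in every topological inverse semigroup containing it as a subsemigroup.
   Context: All topological spaces are Hausdorff. A topological inverse semigroup is an inverse semigroup with a topology making multiplication and inversion continuous. For a set $X$ of cardinality $\lambda$, $\mathscr{I}(X)$ is the semigroup of all partial one-to-one maps of $X$ (including the empty map) under composition; the rank of $\alpha$ is $|\operatorname{ran}\alpha|$, and $\mathscr{I}_\lambda^n=\{\alpha\in\mathscr{I}(X):\operatorname{rank}\alpha\leqslant n\}$. Given a class $\mathfrak{S}$ of topological semigroups, $S\in\mathfrak{S}$ is $H$-closed in $\mathfrak{S}$ if it is closed in every $T\in\mathfrak{S}$ containing $S$ as a subsemigroup, and absolutely $H$-closed in $\mathfrak{S}$ if every continuous homomorphic image of $S$ in any member of $\mathfrak{S}$ is $H$-closed in $\mathfrak{S}$. *)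

(* Defs.v *)
From Stdlib Require Import List Arith Lia ClassicalEpsilon.
Set Implicit Arguments.

Record topology (X : Type) := Topology {
  open : (X -> Prop) -> Prop;
  open_full : open (fun _ => True);
  open_inter : forall U V, open U -> open V -> open (fun x => U x /\ V x);
  open_union : forall F : (X -> Prop) -> Prop,
      (forall U, F U -> open U) -> open (fun x => exists U, F U /\ U x)
}.
Arguments open {X} t U.

Definition closed {X : Type} (t : topology X) (A : X -> Prop) : Prop :=
  open t (fun x => ~ A x).

Definition hausdorff {X : Type} (t : topology X) : Prop :=
  forall x y, x <> y -> exists U V, open t U /\ open t V /\ U x /\ V y /\
    (forall z, ~ (U z /\ V z)).

Definition continuous {X Y : Type} (tX : topology X) (tY : topology Y)
  (f : X -> Y) : Prop :=
  forall V, open tY V -> open tX (fun x => V (f x)).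

(** continuity of a binary map X * X -> X for the product topology
    (checked on basic open rectangles) *)
Definition continuous2 {X : Type} (t : topology X) (m : X -> X -> X) : Prop :=
  forall x y W, open t W -> W (m x y) ->
    exists U V, open t U /\ open t V /\ U x /\ V y /\
      (forall a b, U a -> V b -> W (m a b)).

Definition inverse_semigroup {S : Type} (m : S -> S -> S) (i : S -> S) : Prop :=
  (forall x y z, m x (m y z) = m (m x y) z) /\
  (forall x, m (m x (i x)) x = x /\ m (m (i x) x) (i x) = i x) /\
  (forall x y, m (m x y) x = x -> m (m y x) y = y -> y = i x).

Definition top_inverse_semigroup {S : Type} (m : S -> S -> S) (i : S -> S)
  (t : topology S) : Prop :=
  inverse_semigroup m i /\ hausdorff t /\ continuous2 t m /\ continuous t t i.

Record TIS := MkTIS {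
  tcar :> Type;
  tmul : tcar -> tcar -> tcar;
  tinv : tcar -> tcar;
  ttop : topology tcar;
  tax : top_inverse_semigroup tmul tinv ttop
}.

(** [A] (a subset of [T], which is an inverse subsemigroup of [T] carrying
    the subspace topology) is H-closed in the class of topological inverse
    semigroups: whenever [e] embeds [A] into a topological inverse semigroup
    [T'] as a (topological) subsemigroup, the image [e(A)] is closed in [T']. *)
Definition subsemigroup_embedding (T T' : TIS) (A : T -> Prop) (e : T -> T')
  : Prop :=
  (forall a b, A a -> A b -> e (tmul T a b) = tmul T' (e a) (e b)) /\
  (forall a b, A a -> A b -> e a = e b -> a = b) /\
  (* continuity of e restricted to A (subspace topology on A) *)
  (forall V, open (ttop T') V -> exists U, open (ttop T) U /\
        forall a, A a -> (U a <-> V (e a))) /\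
  (* e is open onto its image (subspace topology on e(A)) *)
  (forall U, open (ttop T) U -> exists V, open (ttop T') V /\
        forall a, A a -> (U a <-> V (e a))).

Definition H_closed_subset (T : TIS) (A : T -> Prop) : Prop :=
  forall (T' : TIS) (e : T -> T'), @subsemigroup_embedding T T' A e ->
    closed (ttop T') (fun y => exists a, A a /\ e a = y).

Definition abs_H_closed {S : Type} (m : S -> S -> S) (tau : topology S) : Prop :=
  forall (T : TIS) (h : S -> T),
    continuous tau (ttop T) h ->
    (forall a b, h (m a b) = tmul T (h a) (h b)) ->
    H_closed_subset T (fun t => exists a, h a = t).

(** a partial one-to-one map of X is encoded by its graph *)
Definition pbij {X : Type} (R : X -> X -> Prop) : Prop :=
  (forall x y y', R x y -> R x y' -> y = y') /\
  (forall x x' y, R x y -> R x' y -> x = x').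

Definition rank_le {X : Type} (R : X -> X -> Prop) (n : nat) : Prop :=
  exists l : list X, length l <= n /\ forall x y, R x y -> In y l.

Definition SIS (X : Type) (n : nat) : Type :=
  { R : X -> X -> Prop | pbij R /\ rank_le R n }.

(** composition, written left to right: x (a b) = (x a) b *)
Definition rcomp {X : Type} (R S : X -> X -> Prop) : X -> X -> Prop :=
  fun x z => exists y, R x y /\ S y z.

Lemma rcomp_ok (X : Type) (n : nat) (R S : X -> X -> Prop) :
  pbij R /\ rank_le R n -> pbij S /\ rank_le S n ->
  pbij (rcomp R S) /\ rank_le (rcomp R S) n.
Proof.
  intros [[fR iR] _] [[fS iS] [l [Hl Hin]]]; split; [split|].
  - intros x z z' [y [H1 H2]] [y' [H1' H2']].
    rewrite (fR _ _ _ H1 H1') in H2. eauto.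
  - intros x x' z [y [H1 H2]] [y' [H1' H2']].
    rewrite (iS _ _ _ H2 H2') in H1. eauto.
  - exists l; split; [exact Hl|]. intros x z [y [_ H]]; eauto.
Qed.

Lemma rinv_ok (X : Type) (n : nat) (R : X -> X -> Prop) :
  pbij R /\ rank_le R n ->
  pbij (fun x y => R y x) /\ rank_le (fun x y => R y x) n.
Proof.
  intros [[fR iR] [l [Hl Hin]]]; split; [split|].
  - intros x y y' H1 H2; eauto.
  - intros x x' y H1 H2; eauto.
  - exists (map (fun y => epsilon (inhabits y) (fun x => R x y)) l).
    rewrite length_map; split; [exact Hl|].
    intros y x H. apply in_map_iff. exists y; split; [|exact (Hin _ _ H)].
    apply (iR _ _ y); [|exact H].
    apply (epsilon_spec (inhabits y) (fun z => R z y)). eauto.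
Qed.

Definition SIS_mul {X : Type} {n : nat} (a b : SIS X n) : SIS X n :=
  exist _ (rcomp (proj1_sig a) (proj1_sig b))
    (rcomp_ok (proj2_sig a) (proj2_sig b)).

Definition SIS_inv {X : Type} {n : nat} (a : SIS X n) : SIS X n :=
  exist _ (fun x y => proj1_sig a y x) (rinv_ok (proj2_sig a)).

(* Main.v *)
Require Import Defs.
From Stdlib Require Import List Arith Lia Classical ClassicalEpsilon FunctionalExtensionality PropExtensionality ProofIrrelevance.
Import ListNotations.

Section Topo.
Variable (Y : Type) (t : topology Y).

Definition clos (P : Y -> Prop) (x : Y) := forall U, open t U -> U x -> exists z, U z /\ P z.

Lemma closed_intro P : (forall x, clos P x -> P x) -> closed t P.
Proof.
  intros H. unfold closed.
  assert (E : (fun x => ~ P x) = (fun x => exists U, (open t U /\ forall z, U z -> ~ P z) /\ U x)).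
  { apply functional_extensionality; intro x; apply propositional_extensionality; split.
    - intro Hx. apply NNPP; intro Hn. apply Hx, H. intros U HU Ux.
      apply NNPP; intro Hn2. apply Hn. exists U. split; [split; [exact HU|]|exact Ux].
      intros z Uz Pz. apply Hn2; eauto.
    - intros [U [[_ HU] Ux]]. exact (HU x Ux). }
  rewrite E. apply open_union. intros U [HU _]; exact HU.
Qed.

Definition pc (f : Y -> Y) (x : Y) := forall W, open t W -> W (f x) ->
  exists V, open t V /\ V x /\ forall z, V z -> W (f z).

Lemma clos_image f x P : pc f x -> clos P x -> clos (fun w => exists z, P z /\ f z = w) (f x).
Proof.
  intros Hf Hc U HU Ux. destruct (Hf U HU Ux) as [V [HV [Vx HVW]]].
  destruct (Hc V HV Vx) as [z [Vz Pz]]. exists (f z); split; eauto.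
Qed.

Lemma clos_mono (P Q : Y -> Prop) x : (forall z, P z -> Q z) -> clos P x -> clos Q x.
Proof. intros H Hc U HU Ux. destruct (Hc U HU Ux) as [z [? ?]]; eauto. Qed.

Lemma pc_comp f g x : pc g x -> pc f (g x) -> pc (fun z => f (g z)) x.
Proof.
  intros Hg Hf W HW Wx. destruct (Hf W HW Wx) as [V [HV [Vx HVW]]].
  destruct (Hg V HV Vx) as [V' [HV' [V'x H']]]. exists V'; eauto.
Qed.

Hypothesis Hhaus : hausdorff t.

Lemma sep_list l x : exists U, open t U /\ U x /\ forall z, In z l -> z <> x -> ~ U z.
Proof.
  induction l as [|a l IH].
  - exists (fun _ => True). split; [apply open_full|]. split; [exact I|]. intros z [].
  - destruct IH as [U [HU [Ux HUl]]].
    destruct (classic (a = x)) as [Ea|Na].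
    + exists U. split; [exact HU|]. split; [exact Ux|]. intros z [Ez|Iz] Nz.
      * subst. congruence.
      * exact (HUl z Iz Nz).
    + destruct (Hhaus x a (fun E => Na (eq_sym E))) as [V1 [V2 [HV1 [HV2 [V1x [V2a Hd]]]]]].
      exists (fun z => U z /\ V1 z). split; [apply open_inter; assumption|].
      split; [split; assumption|]. intros z [Ez|Iz] Nz [Uz V1z].
      * subst z. exact (Hd a (conj V1z V2a)).
      * exact (HUl z Iz Nz Uz).
Qed.

Lemma clos_finite (P : Y -> Prop) l x : (forall z, P z -> In z l) -> clos P x -> P x.
Proof.
  intros Hl Hc. apply NNPP; intro Nx.
  destruct (sep_list l x) as [U [HU [Ux HUl]]].
  destruct (Hc U HU Ux) as [z [Uz Pz]].
  apply (HUl z (Hl z Pz)); [intro E; subst; contradiction | exact Uz].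
Qed.
End Topo.
Arguments clos {Y}. Arguments pc {Y}. Arguments closed_intro {Y}. Arguments clos_image {Y}.
Arguments clos_mono {Y}. Arguments pc_comp {Y}. Arguments sep_list {Y}. Arguments clos_finite {Y}.

Section Alg.
Variable T : TIS.
Local Notation m := (tmul T).
Local Notation i := (tinv T).

Lemma T_assoc x y z : m x (m y z) = m (m x y) z.
Proof. destruct (tax T) as [[A _] _]. apply A. Qed.
Lemma T_reg1 x : m (m x (i x)) x = x.
Proof. destruct (tax T) as [[_ [R _]] _]. apply R. Qed.
Lemma T_reg2 x : m (m (i x) x) (i x) = i x.
Proof. destruct (tax T) as [[_ [R _]] _]. apply R. Qed.
Lemma T_uniq x y : m (m x y) x = x -> m (m y x) y = y -> y = i x.
Proof. destruct (tax T) as [[_ [_ U]] _]. apply U. Qed.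
Lemma T_invinv x : i (i x) = x.
Proof. symmetry. apply T_uniq; [apply T_reg2 | apply T_reg1]. Qed.
Lemma T_idem_inv e : m e e = e -> i e = e.
Proof. intros H. symmetry. apply T_uniq; rewrite !H; reflexivity. Qed.

Lemma idem_r a f : m f f = f -> m (m a f) f = m a f.
Proof. intros H. rewrite <- T_assoc, H. reflexivity. Qed.

Lemma idem_mul e f : m e e = e -> m f f = f -> m (m e f) (m e f) = m e f.
Proof.
  intros He Hf. set (x := i (m e f)).
  assert (R2 : forall a, m (m (m a x) e) f = m a (m x (m e f))).
  { intro a. rewrite <- !T_assoc. reflexivity. }
  assert (H1 : m (m f x) e = x).
  { unfold x. apply T_uniq; fold x.
    - rewrite !T_assoc. rewrite ?(idem_r _ _ Hf), ?(idem_r _ _ He).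
      rewrite R2, T_assoc. unfold x. apply T_reg1.
    - rewrite !T_assoc. rewrite ?(idem_r _ _ Hf), ?(idem_r _ _ He).
      rewrite R2. rewrite <- (T_assoc f (m x (m e f)) x).
      unfold x. rewrite T_reg2. reflexivity. }
  assert (H2 : m x x = x).
  { rewrite <- H1 at 1. rewrite <- H1 at 2. rewrite !T_assoc. rewrite R2.
    rewrite <- (T_assoc f (m x (m e f)) x).
    unfold x. rewrite T_reg2. fold x. exact H1. }
  assert (H3 : i x = m e f). { unfold x. apply T_invinv. }
  rewrite (T_idem_inv x H2) in H3. rewrite <- H3. exact H2.
Qed.

Lemma idem_comm e f : m e e = e -> m f f = f -> m e f = m f e.
Proof.
  intros He Hf.
  pose proof (idem_mul e f He Hf) as Hef. pose proof (idem_mul f e Hf He) as Hfe.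
  rewrite <- (T_idem_inv _ Hfe). apply T_uniq.
  - rewrite !T_assoc. rewrite ?(idem_r _ _ Hf), ?(idem_r _ _ He).
    rewrite <- (T_assoc (m f e) f e). exact Hfe.
  - rewrite !T_assoc. rewrite ?(idem_r _ _ Hf), ?(idem_r _ _ He).
    rewrite <- (T_assoc (m e f) e f). exact Hef.
Qed.
End Alg.

Section SISalg.
Variables (X : Type) (n : nat).

Lemma SIS_eq (a b : SIS X n) : (forall x y, proj1_sig a x y <-> proj1_sig b x y) -> a = b.
Proof.
  destruct a as [R HR], b as [S HS]; simpl; intros H.
  assert (R = S) by (apply functional_extensionality; intro x; apply functional_extensionality;
    intro y; apply propositional_extensionality; apply H).
  subst. f_equal. apply proof_irrelevance.
Qed.

Lemma SIS_reg1 (s : SIS X n) : SIS_mul (SIS_mul s (SIS_inv s)) s = s.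
Proof.
  destruct s as [R [[fR iR] HR]]. apply SIS_eq. simpl. unfold rcomp. intros x z. split.
  - intros [y [[w [H1 H2]] H3]]. rewrite (iR _ _ _ H1 H2). exact H3.
  - intros H. exists x. split; [exists z; split; exact H | exact H].
Qed.

Lemma SIS_reg2 (s : SIS X n) : SIS_mul (SIS_mul (SIS_inv s) s) (SIS_inv s) = SIS_inv s.
Proof.
  destruct s as [R [[fR iR] HR]]. apply SIS_eq. simpl. unfold rcomp. intros x z. split.
  - intros [y [[w [H1 H2]] H3]]. rewrite (fR _ _ _ H1 H2). exact H3.
  - intros H. exists x. split; [exists z; split; exact H | exact H].
Qed.

Definition pid (d : SIS X n) := forall a b, proj1_sig d a b -> a = b.

Lemma pid_ss (s : SIS X n) : pid (SIS_mul s (SIS_inv s)).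
Proof.
  unfold pid; simpl. unfold rcomp. destruct (proj1 (proj2_sig s)) as [fR iR].
  intros a b [c [H1 H2]]. exact (iR _ _ _ H1 H2).
Qed.

Lemma pid_mul (u d : SIS X n) : pid u -> pid d -> pid (SIS_mul u d).
Proof.
  unfold pid; simpl; unfold rcomp. intros Hu Hd a b [c [H1 H2]].
  rewrite (Hu _ _ H1). exact (Hd _ _ H2).
Qed.

Lemma pid_idem (d : SIS X n) : pid d -> SIS_mul d d = d.
Proof.
  intros Hd. apply SIS_eq. simpl. unfold rcomp. intros a b. split.
  - intros [c [H1 H2]]. rewrite (Hd _ _ H1). exact H2.
  - intros H. exists b. split; [exact H|].
    pose proof (Hd _ _ H) as E. subst. exact H.
Qed.

Lemma pid_cover (d : SIS X n) : pid d -> exists l, length l <= n /\ forall a b, proj1_sig d a b -> In a l /\ In b l.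
Proof.
  intros Hd. destruct (proj2 (proj2_sig d)) as [l [Hl Hin]]. exists l. split; [exact Hl|].
  intros a b H. pose proof (Hd _ _ H) as E. subst. split; eapply Hin; exact H.
Qed.

Fixpoint subsets {A} (l : list A) : list (list A) :=
  match l with [] => [[]] | a :: l' => subsets l' ++ map (cons a) (subsets l') end.

Lemma subsets_spec A (L : list A) : forall (R : A -> Prop), (forall p, R p -> In p L) ->
  exists P, In P (subsets L) /\ forall p, R p <-> In p P.
Proof.
  induction L as [|a L IH]; intros R HR.
  - exists []. split; [left; reflexivity|]. intros p; split; [intro H; exact (HR p H)|intros []].
  - destruct (classic (R a)) as [Ra|Na].
    + destruct (IH (fun p => R p /\ p <> a)) as [P [HP HPs]].
      { intros p [Rp Np]. destruct (HR p Rp) as [E|I]; [congruence|exact I]. }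
      exists (a :: P). split.
      * simpl. apply in_or_app. right. apply in_map. exact HP.
      * intros p. split.
        -- intros Rp. destruct (classic (p = a)) as [E|N]; [left; congruence|right; apply HPs; auto].
        -- intros [E|I]; [subst; exact Ra| apply HPs in I; tauto].
    + destruct (IH R) as [P [HP HPs]].
      { intros p Rp. destruct (HR p Rp) as [E|I]; [subst; contradiction|exact I]. }
      exists P. split; [simpl; apply in_or_app; left; exact HP | exact HPs].
Qed.

Lemma finite_image (T : TIS) (g : SIS X n -> T) (t0 : T) (L : list (X*X)) (Q : SIS X n -> Prop) :
  (forall s, Q s -> forall a b, proj1_sig s a b -> In (a,b) L) ->
  exists l, forall z, (exists s, Q s /\ g s = z) -> In z l.
Proof.
  intros HQ.
  set (G := fun P : list (X*X) => epsilon (inhabits t0)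
     (fun z => exists s, (forall a b, proj1_sig s a b <-> In (a,b) P) /\ g s = z)).
  exists (map G (subsets L)). intros z [s [Qs E]]. subst z.
  destruct (subsets_spec _ L (fun p => proj1_sig s (fst p) (snd p))) as [P [HP HPs]].
  { intros [a b] H. exact (HQ s Qs a b H). }
  assert (HG : exists s', (forall a b, proj1_sig s' a b <-> In (a,b) P) /\ g s' = G P).
  { unfold G. apply (epsilon_spec (inhabits t0)
      (fun z => exists s, (forall a b, proj1_sig s a b <-> In (a,b) P) /\ g s = z)).
    exists (g s), s. split; [intros a b; exact (HPs (a,b))|reflexivity]. }
  destruct HG as [s' [Hs' Eg]].
  assert (s' = s). { apply SIS_eq. intros a b. rewrite Hs'. symmetry. exact (HPs (a,b)). }
  subst s'. rewrite Eg. apply in_map. exact HP.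
Qed.
End SISalg.
Arguments pid {X n}.

Section Main.
Variables (X : Type) (n : nat) (T : TIS) (g : SIS X n -> T).
Hypothesis Hg : forall a b, g (SIS_mul a b) = tmul T (g a) (g b).
Local Notation m := (tmul T).
Local Notation i := (tinv T).
Local Notation tt := (ttop T).

Lemma Thaus : hausdorff tt. Proof. destruct (tax T) as [_ [H _]]; exact H. Qed.
Lemma Tc2 : continuous2 tt m. Proof. destruct (tax T) as [_ [_ [H _]]]; exact H. Qed.
Lemma Tci : continuous tt tt i. Proof. destruct (tax T) as [_ [_ [_ H]]]; exact H. Qed.

Lemma pc_lmul a x : pc tt (fun z => m a z) x.
Proof.
  intros W HW Wx. destruct (Tc2 a x W HW Wx) as [U [V [HU [HV [Ua [Vx H]]]]]].
  exists V. split; [exact HV|]. split; [exact Vx|]. intros z Vz. exact (H a z Ua Vz).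
Qed.
Lemma pc_rmul a x : pc tt (fun z => m z a) x.
Proof.
  intros W HW Wx. destruct (Tc2 x a W HW Wx) as [U [V [HU [HV [Ux [Va H]]]]]].
  exists U. split; [exact HU|]. split; [exact Ux|]. intros z Uz. exact (H z a Uz Va).
Qed.
Lemma pc_inv x : pc tt i x.
Proof.
  intros W HW Wx. exists (fun z => W (i z)). split; [exact (Tci W HW)|]. split; [exact Wx|]. auto.
Qed.
Lemma pc_sq x : pc tt (fun z => m z (i z)) x.
Proof.
  intros W HW Wx. destruct (Tc2 x (i x) W HW Wx) as [U [V [HU [HV [Ux [Vx H]]]]]].
  exists (fun z => U z /\ V (i z)). split; [apply open_inter; [exact HU| exact (Tci V HV)]|].
  split; [split; assumption|]. intros z [Uz Vz]. exact (H _ _ Uz Vz).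
Qed.

Lemma g_inv s : g (SIS_inv s) = i (g s).
Proof.
  apply T_uniq; rewrite <- !Hg; [rewrite SIS_reg1 | rewrite SIS_reg2]; reflexivity.
Qed.

Definition EB (z : T) := exists d, pid d /\ g d = z.

Lemma EB_idem z : EB z -> m z z = z.
Proof. intros [d [Hd E]]. subst. rewrite <- Hg, pid_idem; auto. Qed.

Lemma finite_pid_mul (t0 : T) (d : SIS X n) : pid d ->
  (exists l, forall z, (exists s, (exists u, pid u /\ s = SIS_mul u d) /\ g s = z) -> In z l) /\
  (exists l, forall z, (exists s, (exists u, pid u /\ s = SIS_mul d u) /\ g s = z) -> In z l).
Proof.
  intros Hd. destruct (pid_cover _ _ d Hd) as [l [_ Hl]]. split; apply (finite_image _ _ T g t0 (list_prod l l)).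
  - intros s [u [Hu E]] a b H. subst s. simpl in H. destruct H as [c [H1 H2]].
    rewrite (Hu _ _ H1). destruct (Hl _ _ H2). apply in_prod; assumption.
  - intros s [u [Hu E]] a b H. subst s. simpl in H. destruct H as [c [H1 H2]].
    rewrite <- (Hu _ _ H2). destruct (Hl _ _ H1). apply in_prod; assumption.
Qed.

Definition mu r k := exists d, pid d /\ g d = k /\ rank_le (proj1_sig d) r.

Lemma strict d d' r : pid d -> pid d' -> g d <> g d' -> m (g d) (g d') = g d ->
  rank_le (proj1_sig d') r -> exists r', S r' <= r /\ mu r' (g d).
Proof.
  intros Hd Hd' Ne E [l [Hl Hin]].
  assert (Ne2 : SIS_mul d d' <> d'). { intro E2. apply Ne. rewrite <- E, <- Hg, E2. reflexivity. }
  assert (Sub : forall a b, proj1_sig (SIS_mul d d') a b -> proj1_sig d' a b).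
  { simpl. intros a b [c [H1 H2]]. rewrite (Hd _ _ H1). exact H2. }
  assert (Ex : exists a b, proj1_sig d' a b /\ ~ proj1_sig (SIS_mul d d') a b).
  { apply NNPP; intro Hn. apply Ne2. apply SIS_eq. intros a b. split; [apply Sub|].
    intro H. apply NNPP; intro H2. apply Hn. eauto. }
  destruct Ex as [a [b [Hab Nab]]].
  set (dec := fun x y : X => excluded_middle_informative (x = y)).
  exists (length (remove dec b l)). split.
  - pose proof (remove_length_lt dec l b (Hin _ _ Hab)). lia.
  - exists (SIS_mul d d'). split; [apply pid_mul; assumption|]. split; [rewrite Hg; exact E|].
    exists (remove dec b l). split; [lia|]. intros a2 b2 H.
    apply in_in_remove; [|exact (Hin _ _ (Sub _ _ H))].
    intro Eb. subst b2. apply Nab.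
    pose proof (Hd' _ _ (Sub _ _ H)) as E1. pose proof (Hd' _ _ Hab) as E2. subst. exact H.
Qed.

Lemma EB_mul a b : EB a -> EB b -> EB (m a b).
Proof.
  intros [d [Hd E]] [d' [Hd' E']]. subst. exists (SIS_mul d d').
  split; [apply pid_mul; auto | apply Hg].
Qed.

Lemma idem_in y : m y y = y -> clos tt EB y -> EB y.
Proof.
  intros Hy Hc.
  assert (Hi : forall e, EB e -> EB (m y e)).
  { intros e [d [Hd Ed]].
    destruct (proj1 (finite_pid_mul y d Hd)) as [l Hl].
    pose proof (clos_image tt (fun z => m z e) y EB (pc_rmul e y) Hc) as C. cbv beta in C.
    assert (HP : forall z, (exists w, EB w /\ m w e = z) -> In z l).
    { intros z [w [[u [Hu Eu]] Ew]]. apply Hl. exists (SIS_mul u d).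
      split; [exists u; auto|]. rewrite Hg, Eu, Ed; exact Ew. }
    destruct (clos_finite tt Thaus _ l _ HP C) as [w [Hw Ew]]. rewrite <- Ew.
    apply EB_mul; [exact Hw| exists d; auto]. }
  set (K := fun k => exists e, EB e /\ k = m y e).
  assert (KEB : forall k, K k -> EB k) by (intros k [e [He Ek]]; subst; auto).
  assert (Hmax : exists mm, K mm /\ forall k, K k -> m mm k = mm -> k = mm).
  { apply NNPP; intro Hn.
    assert (Hup : forall mm, K mm -> exists k, K k /\ m mm k = mm /\ k <> mm).
    { intros mm Hmm. apply NNPP; intro H2. apply Hn. exists mm. split; [exact Hmm|].
      intros k Hk Ek. apply NNPP; intro Nk. apply H2. eauto. }
    assert (Hind : forall j, exists k, K k /\ forall r, mu r k -> j <= r).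
    { induction j as [|j IH].
      - destruct (Hc (fun _ => True) (open_full tt) I) as [e [_ He]].
        exists (m y e). split; [exists e; auto | intros; lia].
      - destruct IH as [k [Hk Hj]]. destruct (Hup k Hk) as [k' [Hk' [E Nk]]].
        exists k'. split; [exact Hk'|]. intros r [d' [Hd' [Ed' Hr]]].
        destruct (KEB k Hk) as [d [Hd Ed]].
        subst k k'.
        destruct (strict d d' r Hd Hd' (fun E2 => Nk (eq_sym E2)) E Hr) as [r' [Hr' Hmu]].
        specialize (Hj r' Hmu). lia. }
    destruct (Hind (S n)) as [k [Hk Hj]]. destruct (KEB k Hk) as [d [Hd Ed]].
    specialize (Hj n (ex_intro _ d (conj Hd (conj Ed (proj2 (proj2_sig d)))))). lia. }
  destruct Hmax as [mm [[e0 [He0 Em]] Hmx]].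
  assert (Emm : mm = y).
  { apply NNPP; intro Ne.
    destruct (Hi e0 He0) as [d0 [Hd0 Ed0]].
    rewrite <- Em in Ed0.
    destruct (proj2 (finite_pid_mul y d0 Hd0)) as [lF HlF].
    destruct (sep_list tt Thaus lF mm) as [U [HU [Um HUl]]].
    destruct (Thaus mm y Ne) as [V [W [HV [HW [Vm [Wy Hd]]]]]].
    assert (Hmy : m mm y = mm).
    { rewrite Em. rewrite <- T_assoc. rewrite (idem_comm T e0 y (EB_idem e0 He0) Hy).
      rewrite T_assoc, Hy. reflexivity. }
    assert (HUV : open tt (fun z => U z /\ V z)) by (apply open_inter; assumption).
    assert (HUVm : (fun z => U z /\ V z) (m mm y)) by (cbv beta; rewrite Hmy; auto).
    destruct (pc_lmul mm y _ HUV HUVm) as [O [HO [Oy HOU]]].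
    assert (HOW : open tt (fun z => O z /\ W z)) by (apply open_inter; assumption).
    assert (HOWy : (fun z => O z /\ W z) (m y y)) by (cbv beta; rewrite Hy; auto).
    destruct (pc_lmul y y _ HOW HOWy) as [O' [HO' [O'y HO'O]]].
    destruct (Hc O' HO' O'y) as [e [O'e He]].
    destruct (HO'O e O'e) as [Ok Wk].
    destruct (HOU _ Ok) as [Umk Vmk].
    assert (Kk : K (m y e)) by (exists e; auto).
    destruct (KEB _ Kk) as [u [Hu Eu]].
    assert (Hin : In (m mm (m y e)) lF).
    { apply HlF. exists (SIS_mul d0 u). split; [exists u; auto|]. rewrite Hg, Ed0, Eu. reflexivity. }
    assert (Emk : m mm (m y e) = mm).
    { apply NNPP; intro N. exact (HUl _ Hin N Umk). }
    pose proof (Hmx _ Kk Emk) as Ekm. rewrite Ekm in Wk. exact (Hd mm (conj Vm Wk)). }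
  rewrite <- Emm. exact (KEB mm (ex_intro _ e0 (conj He0 Em))).
Qed.

Lemma main_closed x : clos tt (fun z => exists s, g s = z) x -> exists s, g s = x.
Proof.
  intros Hc.
  set (B := fun z => exists s, g s = z) in *.
  assert (Binv : clos tt B (i x)).
  { pose proof (clos_image tt i x B (pc_inv x) Hc) as C. eapply clos_mono; [|exact C].
    intros z [w [[s Es] Ew]]. exists (SIS_inv s). rewrite g_inv, Es; exact Ew. }
  assert (Hy : forall w, clos tt B w -> EB (m w (i w))).
  { intros w Hw. apply idem_in.
    - rewrite T_assoc. rewrite T_reg1. reflexivity.
    - pose proof (clos_image tt (fun z => m z (i z)) w B (pc_sq w) Hw) as C. cbv beta in C.
      eapply clos_mono; [|exact C]. intros z [v [[s Es] Ev]]. exists (SIS_mul s (SIS_inv s)).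
      split; [apply pid_ss|]. rewrite Hg, g_inv, Es. exact Ev. }
  destruct (Hy x Hc) as [d1 [Hd1 E1]].
  pose proof (Hy (i x) Binv) as H2. rewrite T_invinv in H2. destruct H2 as [d2 [Hd2 E2]].
  set (y := m x (i x)) in *. set (f := m (i x) x) in *.
  assert (Ex : m (m y x) f = x).
  { unfold y, f. rewrite T_reg1. rewrite T_assoc. apply T_reg1. }
  pose proof (pc_comp tt (fun w => m w f) (fun z => m y z) x (pc_lmul y x) (pc_rmul f (m y x))) as Hpc.
  pose proof (clos_image tt _ x B Hpc Hc) as C. cbv beta in C.
  destruct (pid_cover _ _ d1 Hd1) as [l1 [_ Hl1]].
  destruct (pid_cover _ _ d2 Hd2) as [l2 [_ Hl2]].
  destruct (finite_image _ _ T g x (list_prod l1 l2)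
     (fun s => exists s0, s = SIS_mul (SIS_mul d1 s0) d2)) as [l Hl].
  { intros s [s0 Es] a b H. subst s. simpl in H. destruct H as [c [[w [H1 H2]] H3]].
    apply in_prod; [exact (proj1 (Hl1 _ _ H1)) | exact (proj2 (Hl2 _ _ H3))]. }
  assert (HP : forall z, (exists w, B w /\ m (m y w) f = z) -> In z l).
  { intros z [w [[s0 Es] Ew]]. apply Hl. exists (SIS_mul (SIS_mul d1 s0) d2).
    split; [exists s0; reflexivity|]. rewrite !Hg, E1, E2, Es. exact Ew. }
  destruct (clos_finite tt Thaus _ l _ HP C) as [w [[s0 Es] Ew]].
  exists (SIS_mul (SIS_mul d1 s0) d2). rewrite !Hg, E1, E2, Es, Ew. exact Ex.
Qed.

End Main.

Theorem corollary2 (X : Type) (n : nat) (tau : topology (SIS X n)) :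
  inhabited X -> 1 <= n ->
  hausdorff tau -> continuous2 tau (@SIS_mul X n) -> continuous tau tau (@SIS_inv X n) ->
  abs_H_closed (@SIS_mul X n) tau.
Proof.
  intros _ _ _ _ _ T h _ Hhom. unfold H_closed_subset. intros T' e [He1 _].
  set (g := fun s => e (h s)).
  assert (Hg : forall a b, g (SIS_mul a b) = tmul T' (g a) (g b)).
  { intros a b. unfold g. rewrite Hhom. apply He1; eexists; reflexivity. }
  apply closed_intro. intros x Hx.
  assert (Hx' : clos (ttop T') (fun z => exists s, g s = z) x).
  { eapply clos_mono; [|exact Hx]. intros z [a [[s Es] Ea]]. exists s. unfold g. rewrite Es. exact Ea. }
  destruct (main_closed X n T' g Hg x Hx') as [s Es].
  exists (h s). split; [exists s; reflexivity | exact Es].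
Qed.
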